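(* Every structure over a binary signature which has bounded degree is ptp-conservative.
   Context: A binary signature consists of relation symbols of arity at most 2 and constants. A structure has bounded degree if there is $N$ such that every element occurs together with at most $N$ other elements in binary atoms. Positive types: for a structure $\mathcal C$ over signature $\Theta$, $e\in\mathcal C$, $n\in\mathbb N$, $ptp_n(\mathcal C,e,\Theta)$ is the set of conjunctive queries $\Psi(\bar x,y)$ with $|\bar x|<n$ over relations and constants of $\Theta$ (equality atoms $x=c$ allowed) with $\mathcal C\models\exists\bar x\Psi(\bar x,e)$; $d\equiv_n e$ iff their positive $n$-types coincide; $M_n^\Theta(\mathcal C)$ is the quotient $\mathcal C/\equiv_n$ where a tuple of classes is in $R$ iff some representatives are; $q_n$ is the quotient map. Colors are unary predicates $K^l_h$. A coloring of $\mathcal C$ (over $\Sigma$) is a structure $\bar{\mathcal C}$ over a finite signature $\bar\Sigma$ with $\Sigma\subseteq\bar\Sigma\subseteq\Sigma\cup\{K^l_h\}$, restricting to $\mathcal C$ on $\Sigma$, in which each element satisfies exactly one color. $\bar{\mathcal C}$ is $n$-conservative up to size $m$ if $ptp_m(\mathcal C,e,\Sigma)=ptp_m(M^{\bar\Sigma}_n(\bar{\mathcal C}),q_n(e),\Sigma)$ for every $e\in\mathcal C$. $\mathcal C$ is ptp-conservative if for every $m$ there exist $n$ and a coloring of $\mathcal C$ which is $n$-conservative up to size $m$. *)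

(* Defs.v *)
From mathcomp Require Import all_boot.
Set Implicit Arguments. Unset Strict Implicit. Unset Printing Implicit Defensive.

Record bsig := BSig { rel0 : finType; rel1 : finType; rel2 : finType; cst : finType }.

Record structure (S : bsig) := Struct {
  dom : Type;
  int0 : rel0 S -> Prop;
  int1 : rel1 S -> dom -> Prop;
  int2 : rel2 S -> dom -> dom -> Prop;
  intc : cst S -> dom }.
Arguments dom {S} s.
Arguments int0 {S} s _.
Arguments int1 {S} s _ _.
Arguments int2 {S} s _ _ _.
Arguments intc {S} s _.

(* Conjunctive queries Psi(x_0..x_{k-1}, y): TVar None is y, TVar (Some i) is x_i. *)
Inductive term (S : bsig) (k : nat) :=
  | TVar of option 'I_k
  | TCst of cst S.

Inductive atom (S : bsig) (k : nat) :=
  | A0 of rel0 S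
  | A1 of rel1 S & term S k
  | A2 of rel2 S & term S k & term S k
  | AEq of term S k & cst S.

Definition cq (S : bsig) (k : nat) := seq (atom S k).

Definition eval_term S (A : structure S) k (v : 'I_k -> dom A) (e : dom A)
  (t : term S k) : dom A :=
  match t with
  | TVar None => e
  | TVar (Some i) => v i
  | TCst c => intc A c
  end.

Definition holds_atom S (A : structure S) k (v : 'I_k -> dom A) (e : dom A)
  (a : atom S k) : Prop :=
  match a with
  | A0 r => int0 A r
  | A1 r t => int1 A r (eval_term v e t)
  | A2 r t1 t2 => int2 A r (eval_term v e t1) (eval_term v e t2)
  | AEq t c => eval_term v e t = intc A c
  end.

Definition sat_cq S (A : structure S) k (psi : cq S k) (e : dom A) : Prop :=
  exists v : 'I_k -> dom A, foldr (fun a P => holds_atom v e a /\ P) True psi.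

Arguments sat_cq {S} A {k} psi e.
Definition ptp S (A : structure S) (n : nat) (e : dom A) : forall k, cq S k -> Prop :=
  fun k psi => k < n /\ sat_cq A psi e.

Arguments ptp {S} A n e {k} _.
Definition ptp_equiv S (A : structure S) (n : nat) (d e : dom A) : Prop :=
  forall k (psi : cq S k), ptp A n d psi <-> ptp A n e psi.

Arguments ptp_equiv {S} A n d e.
Definition ptp_class S (A : structure S) (n : nat) (d : dom A) : dom A -> Prop :=
  fun d' => ptp_equiv A n d d'.

Arguments ptp_class {S} A n d _.
Definition qdom S (A : structure S) (n : nat) :=
  {P : dom A -> Prop | exists d, P = ptp_class A n d}.

Definition qmap S (A : structure S) (n : nat) (d : dom A) : qdom A n :=
  exist _ (ptp_class A n d) (ex_intro _ d erefl).

Arguments qmap {S} A n d.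
Definition quotient S (A : structure S) (n : nat) : structure S :=
  {| dom := qdom A n;
     int0 := int0 A;
     int1 := fun r X => exists d, sval X d /\ int1 A r d;
     int2 := fun r X Y => exists d d', sval X d /\ sval Y d' /\ int2 A r d d';
     intc := fun c => qmap A n (intc A c) |}.

Arguments quotient {S} A n.
(* Sigma-bar = Sigma extended by the colors K^l_h for (l,h) in the finite list K. *)
Definition colsig (S : bsig) (K : seq (nat * nat)) : bsig :=
  BSig (rel0 S) (rel1 S + seq_sub K)%type (rel2 S) (cst S).

Definition colored S (A : structure S) (K : seq (nat * nat))
  (col : seq_sub K -> dom A -> Prop) : structure (colsig S K) :=
  @Struct (colsig S K) (dom A) (int0 A)
    (fun (r : (rel1 S + seq_sub K)%type) d =>
       match r with inl r' => int1 A r' d | inr k => col k d end)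
    (int2 A) (intc A).

Arguments colored {S} A {K} col.
Definition reduct S K (B : structure (colsig S K)) : structure S :=
  @Struct S (dom B) (int0 B) (fun (r : rel1 S) d => int1 B (inl r) d)
    (int2 B) (intc B).

Arguments reduct {S K} B.
Definition is_coloring S (A : structure S) (K : seq (nat * nat)) (col : seq_sub K -> dom A -> Prop) :=
  forall d : dom A, exists! k : seq_sub K, col k d.

Arguments is_coloring {S A K} col.
Definition n_conservative S (A : structure S) (K : seq (nat * nat)) (col : seq_sub K -> dom A -> Prop)
  (n m : nat) : Prop :=
  forall (e : dom A) k (psi : cq S k),
    ptp A m e psi <->
    ptp (reduct (quotient (colored A col) n)) m (qmap (colored A col) n e) psi.

Arguments n_conservative {S A K} col n m.
Definition ptp_conservative S (A : structure S) : Prop :=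
  forall m : nat, exists (n : nat) (K : seq (nat * nat)) (col : seq_sub K -> dom A -> Prop),
    is_coloring col /\ n_conservative col n m.

Definition neighbour S (A : structure S) (e d : dom A) : Prop :=
  d <> e /\ exists r, int2 A r e d \/ int2 A r d e.

Arguments neighbour {S} A e d.
Definition bounded_degree S (A : structure S) : Prop :=
  exists N : nat, forall e : dom A,
    ~ exists f : 'I_N.+1 -> dom A, injective f /\ forall i, neighbour A e (f i).

(* Main.v *)
Require Import Defs.
From mathcomp Require Import all_boot.
From mathcomp Require Import zify.
From mathcomp Require Import boolp.
From mathcomp Require classical_sets.
Set Implicit Arguments. Unset Strict Implicit. Unset Printing Implicit Defensive.

Module APart.
Import classical_sets.
Lemma NNPP (P : Prop) : ~ ~ P -> P.
Proof. by case: (EM P) => // H /(_ H). Qed.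

Section Graph.
Variables (S : bsig) (C : structure S).

Definition E (a b : dom C) := exists r, int2 C r a b \/ int2 C r b a.

Fixpoint near (l : nat) (a b : dom C) : Prop :=
  match l with 0 => a = b | l'.+1 => near l' a b \/ exists c, near l' a c /\ E c b end.

Lemma E_sym a b : E a b -> E b a.
Proof. by move=> [r [H|H]]; exists r; [right|left]. Qed.

Lemma near_refl l a : near l a a.
Proof. by elim: l => [|l IH] //=; left. Qed.

Lemma near_S l a b : near l a b -> near l.+1 a b.
Proof. by left. Qed.

Lemma near_mono l l' a b : l <= l' -> near l a b -> near l' a b.
Proof.
move=> /subnK <-; elim: (l' - l) => [//|j IH] H.
by rewrite addSn; apply: near_S; apply: IH.
Qed.

Lemma near_E l a c b : near l a c -> E c b -> near l.+1 a b.
Proof. by move=> H1 H2; right; exists c. Qed.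

Lemma near_trans l l' a b c : near l a b -> near l' b c -> near (l + l') a c.
Proof.
elim: l' c => [|l' IH] c H1 /=.
  by move=> <-; rewrite addn0.
rewrite addnS => -[H|[c' [H H']]]; first by left; apply: IH.
by right; exists c'; split => //; apply: IH.
Qed.

Lemma near_sym l a b : near l a b -> near l b a.
Proof.
elim: l a b => [|l IH] a b /=; first by move=> ->.
move=> [H|[c [H H']]]; first by left; apply: IH.
have H1 : near 1 b c by right; exists b; split => //; apply: E_sym.
by have := near_trans H1 (IH _ _ H); rewrite add1n.
Qed.

Fixpoint mem_l (x : dom C) (s : seq (dom C)) : Prop :=
  match s with [::] => False | y :: s' => y = x \/ mem_l x s' end.

Lemma mem_l_flatten (f : dom C -> seq (dom C)) c s x :
  mem_l c s -> mem_l x (f c) -> mem_l x (flatten (map f s)).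
Proof.
elim: s => [//|y s IH] /= [<-|H] Hx.
  elim: (f y) Hx => [//|z t IH'] /= [->|H]; [by left|by right; apply: IH'].
elim: (f y) => [|z t IH'] /=; [by apply: IH|by right].
Qed.

Lemma sumn_le (T : Type) (g : T -> nat) (s : seq T) N :
  (forall x, g x <= N) -> sumn (map g s) <= size s * N.
Proof.
move=> H; elim: s => [//|x s IH] /=.
by rewrite mulSn; apply: leq_add.
Qed.

Lemma nb_list : bounded_degree C ->
  exists N, forall a, exists s, size s <= N /\ forall b, neighbour C a b -> mem_l b s.
Proof.
move=> [N HN]; exists N.+1 => a.
set P := neighbour C a.
have Q : forall j, (exists s, size s <= j /\ forall b, P b -> mem_l b s) \/
  (exists f : nat -> dom C, (forall i i', i < j -> i' < j -> f i = f i' -> i = i')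
      /\ forall i, i < j -> P (f i)).
  elim=> [|j IH].
    right; exists (fun _ => a); split => //.
  case: IH => [[s [Hs Hc]]|[f [Hinj Hp]]].
    by left; exists s; split => //; apply: leqW.
  case: (EM (forall b, P b -> exists i, i < j /\ f i = b)) => [Hall|Hn].
    left; exists (map f (iota 0 j)); split; first by rewrite size_map size_iota.
    move=> b /Hall [i [Hij <-]].
    have : i \in iota 0 j by rewrite mem_iota.
    elim: (iota 0 j) => [//|z t IH'] /=; rewrite inE => /orP [/eqP ->|Ht].
      by left. by right; apply: IH'.
  have [b [Pb Hb]] : exists b, P b /\ forall i, i < j -> f i <> b.
    apply: NNPP => Hc; apply: Hn => b Pb; apply: NNPP => Hb; apply: Hc.
    by exists b; split => // i Hij Hfi; apply: Hb; exists i.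
  right; exists (fun i => if i == j then b else f i); split.
    move=> i i' Hi1 Hi2.
    case: eqP => [->|/eqP Hij]; case: eqP => [->|/eqP Hij'] //.
    - move=> Hf. exfalso. apply: (Hb i') => //. lia.
    - move=> Hf. exfalso. apply: (Hb i) => //; lia.
    - by apply: Hinj; lia.
  move=> i Hi; case: eqP => [_|Hne] //; apply: Hp; lia.
case: (Q N.+1) => [//|[f [Hinj Hp]]].
exfalso; apply: (HN a); exists (fun i : 'I_N.+1 => f i); split.
  by move=> i i' /(Hinj _ _ (ltn_ord i) (ltn_ord i')) /val_inj.
by move=> i; apply: Hp.
Qed.


Section Ball.
Variables (N : nat) (nbf : dom C -> seq (dom C)).
Hypothesis nbf_size : forall a, size (nbf a) <= N.
Hypothesis nbf_cov : forall a b, neighbour C a b -> mem_l b (nbf a).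

Fixpoint ball (l : nat) (a : dom C) : seq (dom C) :=
  match l with 0 => [:: a] | l'.+1 => flatten [seq c :: nbf c | c <- ball l' a] end.

Lemma ball_size l a : size (ball l a) <= N.+1 ^ l.
Proof.
elim: l => [|l IH] //=.
rewrite size_flatten /shape -map_comp expnSr.
apply: leq_trans (@sumn_le _ _ _ N.+1 _) _.
  by move=> x /=; rewrite ltnS nbf_size.
by rewrite leq_mul2r IH orbT.
Qed.

Lemma ball_cov l a b : near l a b -> mem_l b (ball l a).
Proof.
elim: l b => [|l IH] b /=; first by move=> ->; left.
move=> [H|[c [H H']]].
  by apply: (mem_l_flatten (f := fun c => c :: nbf c) (IH _ H)); left.
apply: (mem_l_flatten (f := fun c => c :: nbf c) (IH _ H)).
case: (EM (b = c)) => [->|Hne]; first by left.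
by right; apply: nbf_cov; split.
Qed.
End Ball.

Definition separated (K : seq (nat * nat)) (col : seq_sub K -> dom C -> Prop) L :=
  forall k a b, near L a b -> col k a -> col k b -> a = b.

Local Open Scope classical_set_scope.
Lemma coloring L : bounded_degree C ->
  exists K (col : seq_sub K -> dom C -> Prop), is_coloring col /\ separated col L.
Proof.
move=> /nb_list [N HN].
have [nbf Hnbf] := choice HN.
set B := N.+1 ^ L.
pose T := (dom C * 'I_B.+1)%type.
pose P := fun X : set T =>
  (forall a c c', X (a, c) -> X (a, c') -> c = c') /\
  (forall a b c, a <> b -> near L a b -> X (a, c) -> X (b, c) -> False).
have [A [[Af Ap] Amax]] : exists A, P A /\ forall B, A `<` B -> ~ P B.
  apply: Zorn_bigcup => F FP Ftot; split.
    move=> a c c' [X FX HX] [Y FY HY].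
    case: (Ftot _ _ FX FY) => HXY.
      by apply: (proj1 (FP _ FY)) (HXY _ HX) HY.
    by apply: (proj1 (FP _ FX)) HX (HXY _ HY).
  move=> a b c Hab Hn [X FX HX] [Y FY HY].
  case: (Ftot _ _ FX FY) => HXY.
    by apply: (proj2 (FP _ FY)) Hab Hn (HXY _ HX) HY.
  by apply: (proj2 (FP _ FX)) Hab Hn HX (HXY _ HY).
have Atot : forall a, exists c, A (a, c).
  move=> a; apply: NNPP => Hna.
  have [cs [Hcs Hcov]] : exists cs : seq 'I_B.+1, size cs <= size (ball nbf L a) /\
      forall b c, mem_l b (ball nbf L a) -> A (b, c) -> c \in cs.
    elim: (ball nbf L a) => [|b s [cs [Hcs Hcov]]].
      by exists [::].
    case: (EM (exists c, A (b, c))) => [[c0 Hc0]|Hnb].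
      exists (c0 :: cs); split; first by [].
      move=> b' c /= [<-|Hb'] Hc; rewrite inE.
        by rewrite (Af _ _ _ Hc Hc0) eqxx.
      by rewrite (Hcov _ _ Hb' Hc) orbT.
    exists cs; split; first by apply: leq_trans Hcs _; apply: leqnSn.
    move=> b' c /= [Hb'|Hb'] Hc; last by apply: (Hcov b' c).
    subst b'.
    by exfalso; apply: Hnb; exists c.
  have [c Hc] : exists c, c \notin cs.
    apply: NNPP => Hn.
    have Hsub : forall c, c \in cs.
      by move=> c; apply: NNPP => Hc; apply: Hn; exists c; apply/negP.
    have H0 : #|'I_B.+1| <= #|cs|.
      apply: subset_leq_card; apply/fintype.subsetP => x _; exact: Hsub.
    have H1 := leq_trans H0 (card_size cs).
    rewrite card_ord in H1.
    have := leq_trans H1 (leq_trans Hcs (ball_size (fun x => proj1 (Hnbf x)) L a)).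
    by rewrite ltnn.
  have Hcv : forall b, near L a b -> mem_l b (ball nbf L a).
    by move=> b; apply: ball_cov => a0 b0; apply: (proj2 (Hnbf a0)).
  apply: (Amax (A `|` [set (a, c)])).
    split; first by move=> x Hx; left.
    by move=> /(_ (a, c)) H; apply: Hna; exists c; apply: H; right.
  split.
    move=> a0 c0 c0' [H|H] [H'|H'].
    - exact: Af H H'.
    - injection H' => _ E1; subst a0; exfalso; apply: Hna; exists c0; exact: H.
    - injection H => _ E1; subst a0; exfalso; apply: Hna; exists c0'; exact: H'.
    - injection H => E2 _; injection H' => E2' _; congruence.
  move=> a0 b0 c0 Hab Hn [H|H] [H'|H'].
  - exact: Ap Hab Hn H H'.
  - injection H' => E2 E1; subst b0 c0.
    by move: Hc; rewrite (Hcov _ _ (Hcv _ (near_sym Hn)) H).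
  - injection H => E2 E1; subst a0 c0.
    by move: Hc; rewrite (Hcov _ _ (Hcv _ Hn) H').
  - injection H => _ E1; injection H' => _ E1'; congruence.
pose K := [seq ((nat_of_ord c), 0) | c <- enum 'I_B.+1].
have inK : forall c : 'I_B.+1, ((nat_of_ord c), 0) \in K.
  by move=> c; apply: map_f; rewrite mem_enum.
exists K, (fun k d => exists c, A (d, c) /\ ssval k = (nat_of_ord c, 0)).
split.
  move=> d; have [c Hc] := Atot d.
  exists (SeqSub (inK c)); split; first by exists c.
  move=> k [c' [Hc' Hk]]; apply: val_inj => /=.
  by rewrite Hk (Af _ _ _ Hc Hc').
move=> k a b Hn [c [Ha Hka]] [c' [Hb Hkb]].
apply: NNPP => Hab.
have Ecc : c = c' by apply: val_inj; rewrite Hka in Hkb; case: Hkb.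
subst c'; exact: Ap Hab Hn Ha Hb.
Qed.

End Graph.

End APart.
Import APart.

Section Queries.
Variables (S : bsig) (C : structure S) (K : seq (nat * nat))
  (col : seq_sub K -> dom C -> Prop).
Hypothesis Hcol : is_coloring col.
Variable L : nat.
Hypothesis HL : 2 <= L.
Hypothesis Hsep : separated col L.

Local Notation S' := (colsig S K).
Local Notation CC := (colored C col).

Definition le p (b d : dom C) :=
  forall j (phi : cq S' j), j < p -> sat_cq CC phi d -> sat_cq CC phi b.

Definition mapA (T : bsig) j j' (f : term T j -> term T j') (a : atom T j) : atom T j' :=
  match a with
  | A0 r => @A0 T j' r
  | A1 r t => A1 r (f t)
  | A2 r t1 t2 => A2 r (f t1) (f t2)
  | AEq t c => AEq (f t) c
  end.

Lemma holds_mapA (T : bsig) (A : structure T) j j' (f : term T j -> term T j')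
   (v : 'I_j' -> dom A) x (v' : 'I_j -> dom A) w :
  (forall t, eval_term v x (f t) = eval_term v' w t) ->
  forall a, holds_atom v x (mapA f a) <-> holds_atom v' w a.
Proof. by move=> H [r|r t|r t1 t2|t c] /=; rewrite ?H. Qed.

Lemma fold_mapA (T : bsig) (A : structure T) j j' (f : term T j -> term T j')
   (v : 'I_j' -> dom A) x (v' : 'I_j -> dom A) w :
  (forall t, eval_term v x (f t) = eval_term v' w t) ->
  forall phi, foldr (fun a P => holds_atom v x a /\ P) True (map (mapA f) phi) <->
    foldr (fun a P => holds_atom v' w a /\ P) True phi.
Proof.
move=> H; elim=> [//|a phi IH] /=.
by have := holds_mapA H a; tauto.
Qed.

Definition liftT j (t : term S' j) : term S' j.+1 :=
  match t with
  | TVar None => TVar _ (Some ord_max)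
  | TVar (Some i) => TVar _ (Some (lift ord_max i))
  | TCst c => TCst _ c
  end.

Definition Qry (dir : bool) (r : rel2 S) (kc : seq_sub K) j (phi : cq S' j) : cq S' j.+1 :=
  (if dir then @A2 S' j.+1 r (TVar _ None) (TVar _ (Some ord_max))
   else @A2 S' j.+1 r (TVar _ (Some ord_max)) (TVar _ None))
  :: @A1 S' j.+1 (inr kc : rel1 S') (TVar _ (Some ord_max)) :: map (mapA (@liftT j)) phi.

Definition Rdir (dir : bool) (r : rel2 S) (x w : dom C) :=
  if dir then int2 C r x w else int2 C r w x.

Lemma satQ dir r kc j (phi : cq S' j) x :
  sat_cq CC (Qry dir r kc phi) x <->
  exists w, Rdir dir r x w /\ col kc w /\ sat_cq CC phi w.
Proof.
split.
  move=> [v /= [H1 [H2 H3]]].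
  exists (v ord_max); split; first by case: dir H1.
  split=> //; exists (fun i => v (lift ord_max i)).
  have Heq : forall t, eval_term v x (@liftT j t) =
     eval_term (fun i => v (lift ord_max i)) (v ord_max) t by case=> [[i|]|c].
  exact: (proj1 (fold_mapA Heq phi) H3).
move=> [w [H1 [H2 [v' H3]]]].
exists (fun i => match unlift ord_max i with Some i' => v' i' | None => w end).
rewrite /=; split; first by rewrite /Rdir in H1; case: dir H1 => H1 /=; rewrite unlift_none.
split; first by rewrite unlift_none.
have Heq : forall t, eval_term
   (fun i => match unlift ord_max i with Some i' => v' i' | None => w end) x (@liftT j t) =
     eval_term v' w t by case=> [[i|]|c] //=; rewrite ?liftK ?unlift_none.
exact: (proj2 (fold_mapA Heq phi) H3).
Qed.

Lemma le_mono p p' b d : p' <= p -> le p b d -> le p' b d.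
Proof. by move=> Hp H j phi Hj; apply: H; lia. Qed.

Lemma step p dir r (b d d' : dom C) : 0 < p ->
  le p.+1 b d -> Rdir dir r d d' ->
  exists w, Rdir dir r b w /\ le p w d' /\ (forall kc, col kc d' -> col kc w).
Proof.
move=> Hp Hle HR.
have [kc [Hkc Hu]] := Hcol d'.
have Hd : forall j (phi : cq S' j), sat_cq CC phi d' -> sat_cq CC (Qry dir r kc phi) d.
  by move=> j phi Hphi; apply/satQ; exists d'.
have [w [Hw1 [Hw2 _]]] : exists w, Rdir dir r b w /\ col kc w /\ sat_cq CC (Nil (atom S' 0)) w.
  apply/satQ; apply: Hle; first by []. apply: Hd.
  by exists (fun i : 'I_0 => d').
have Ebw : forall w', Rdir dir r b w' -> E b w'.
  by move=> w'; case: dir {Hw1 HR Hd} => H; exists r; [left|right].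
exists w; split => //; split.
  move=> j phi Hj Hphi.
  have Hj' : j.+1 < p.+1 by [].
  have [w' [Hw1' [Hw2' Hw3']]] := (satQ _ _ _ _ _).1 (Hle _ _ Hj' (Hd _ _ Hphi)).
  have Hn : near L w w'.
    apply: near_mono HL _.
    have H1 : near 1 w b by apply: near_E (near_refl 0 w) (E_sym (Ebw _ Hw1)).
    have H2 : near 1 b w' by apply: near_E (near_refl 0 b) (Ebw _ Hw1').
    exact: near_trans H1 H2.
  by rewrite (Hsep Hn Hw2 Hw2').
by move=> kc' Hkc'; rewrite -(Hu _ Hkc').
Qed.

End Queries.

Fixpoint memP (T : Type) (x : T) (s : seq T) : Prop :=
  match s with [::] => False | y :: s' => y = x \/ memP x s' end.

Lemma fold_memP (T : Type) (h : T -> Prop) (s : seq T) :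
  foldr (fun a P => h a /\ P) True s <-> forall a, memP a s -> h a.
Proof.
elim: s => [|x s IH] /=; first by split.
split.
  by move=> [Hx /IH Hs] a [<-|Ha] //; apply: Hs.
by move=> H; split; [apply: H; left|apply/IH => a Ha; apply: H; right].
Qed.

Section Lift.
Variables (S : bsig) (C : structure S) (K : seq (nat * nat))
  (col : seq_sub K -> dom C -> Prop).
Hypothesis Hcol : is_coloring col.
Variable L : nat.
Hypothesis HL : 2 <= L.
Hypothesis Hsep : separated col L.
Variable n : nat.
Hypothesis Hn : 2 <= n.

Local Notation S' := (colsig S K).
Local Notation CC := (colored C col).
Local Notation M := (quotient CC n).
Local Notation le := (le col).

Lemma equiv_sat (d d' : dom C) j (phi : cq S' j) :
  ptp_equiv CC n d d' -> j < n -> sat_cq CC phi d -> sat_cq CC phi d'.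
Proof. by move=> H Hj Hs; have [H1 _] := H j phi; case: (H1 (conj Hj Hs)). Qed.

Lemma equiv_sym (d d' : dom C) : ptp_equiv CC n d d' -> ptp_equiv CC n d' d.
Proof. by move=> H j phi; split => /(H j phi). Qed.

Lemma class_equiv (X : qdom CC n) d d' : sval X d -> sval X d' -> ptp_equiv CC n d d'.
Proof.
case: X => P [d0 HP] /=; rewrite HP => H1 H2 j phi.
by split => H; [apply/H2; apply/H1 | apply/H1; apply/H2].
Qed.

Definition leX p (b : dom C) (X : qdom CC n) := forall d, sval X d -> le p b d.

Lemma leX_mono p p' b X : p' <= p -> leX p b X -> leX p' b X.
Proof. by move=> Hp H d Hd; apply: le_mono Hp (H d Hd). Qed.

Lemma leX_of p b (X : qdom CC n) d : p <= n -> sval X d -> le p b d -> leX p b X.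
Proof.
move=> Hp Hd Hle d' Hd' j phi Hj Hs; apply: (Hle j phi Hj).
apply: (equiv_sat (class_equiv Hd' Hd)) _ Hs; lia.
Qed.

Lemma leX_qmap x : leX n x (qmap CC n x).
Proof.
move=> d /= Hd j phi Hj Hs; apply: (equiv_sat (equiv_sym Hd)) Hj Hs.
Qed.

Lemma leX_rep (X : qdom CC n) d0 : sval X d0 -> leX n d0 X.
Proof.
move=> H0 d Hd j phi Hj Hs; exact: equiv_sat (class_equiv Hd H0) Hj Hs.
Qed.

Lemma pin (w d' : dom C) c : le 1 w d' -> sval (qmap CC n (intc C c)) d' -> w = intc C c.
Proof.
move=> Hle /= Hd.
pose phi := [:: @AEq S' 0 (TVar _ None) c].
have H1 : sat_cq CC phi (intc C c) by exists (fun i : 'I_0 => intc C c).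
have := Hle 0 phi erefl (equiv_sat Hd (ltnW Hn) H1).
by move=> [v [/= H _]].
Qed.

Lemma le_unary p (b d : dom C) (r : rel1 S') : 0 < p -> le p b d -> int1 CC r d -> int1 CC r b.
Proof.
move=> Hp Hle Hd.
pose phi := [:: @A1 S' 0 r (TVar _ None)].
have := Hle 0 phi Hp.
by move=> /(_ (ex_intro _ (fun i : 'I_0 => d) (conj Hd I))) [v [/= H _]].
Qed.

Definition isvar k (t : term S k) := if t is TVar _ then true else false.

Lemma atom_lift k (v : 'I_k -> qdom CC n) (a : 'I_k -> dom C) (e : dom C) (atm : atom S k) :
  (forall t, leX 2 (eval_term a e t) (eval_term (A := reduct M) v (qmap CC n e) t)) ->
  (forall r t1 t2, atm = A2 r t1 t2 -> isvar t1 -> isvar t2 ->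
      near L.-1 (eval_term a e t1) (eval_term a e t2)) ->
  holds_atom (A := reduct M) v (qmap CC n e) atm -> holds_atom a e atm.
Proof.
move=> Ht Hnear.
case: atm Hnear => [r|r t|r t1 t2|t c] Hnear /=.
- by [].
- move=> [d [Hd Hr]].
  exact: (@le_unary 2 _ _ (inl r) isT (Ht t d Hd) Hr).
- move=> [d [d' [Hd [Hd' Hr]]]].
  have Hb1 := Ht t1 d Hd; have Hb2 := Ht t2 d' Hd'.
  case: t2 Hnear Hd' Hb2 => [s2|c2] Hnear Hd' Hb2.
  + case: t1 Hnear Hd Hb1 => [s1|c1] Hnear Hd Hb1.
    * have [w [Hw1 [Hw2 Hw3]]] := step Hcol HL Hsep (p := 1) (dir := true) (r := r) isT Hb1 Hr.
      have [kc [Hkc _]] := Hcol d'.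
      have Hcw := Hw3 _ Hkc.
      have Hcb := @le_unary 2 _ _ (inr kc) isT Hb2 Hkc.
      have H1 : near 1 w (eval_term a e (TVar S s1)).
        by apply: near_E (near_refl 0 w) _; exists r; right.
      have Hn' : near L w (eval_term a e (TVar S s2)).
        apply: (near_mono (l := 1 + L.-1)); first lia.
        exact: near_trans H1 (Hnear r _ _ erefl isT isT).
      have Hw := Hsep Hn' Hcw Hcb.
      by rewrite Hw in Hw1.
    * have [w [Hw1 [Hw2 _]]] := step Hcol HL Hsep (p := 1) (dir := false) (r := r) isT Hb2 Hr.
      by rewrite /= -(pin Hw2 Hd).
  + have [w [Hw1 [Hw2 _]]] := step Hcol HL Hsep (p := 1) (dir := true) (r := r) isT Hb1 Hr.
    by rewrite /= -(pin Hw2 Hd').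
- move=> Heq.
  have Hb := Ht t.
  rewrite Heq in Hb.
  apply: (pin (d' := intc C c)); last by move=> j phi; split.
  have H2 : le 2 (eval_term a e t) (intc C c) by apply: Hb => j phi; split.
  by move=> j phi Hj; apply: H2; lia.
Qed.


Lemma class_nonempty (X : qdom CC n) : exists d, sval X d.
Proof.
case: X => P [d0 HP] /=; exists d0; rewrite HP.
by move=> j phi; split.
Qed.

Definition upd (T : eqType) (U : Type) (f : T -> U) (x : T) (y : U) :=
  fun u => if u == x then y else f u.

Section Iter.
Variables (k : nat) (psi : cq S k) (e : dom C) (v : 'I_k -> qdom CC n).
Hypothesis Hsat : forall atm, memP atm psi ->
  holds_atom (A := reduct M) v (qmap CC n e) atm.
Hypothesis Hnk : k.+3 <= n.
Hypothesis HLk : (2 * k).+1 <= L.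

Definition Xv (s : option 'I_k) : qdom CC n :=
  match s with None => qmap CC n e | Some i => v i end.

Lemma eval_Xv s : eval_term (A := reduct M) v (qmap CC n e) (TVar S s) = Xv s.
Proof. by case: s. Qed.

Definition edge (s t : option 'I_k) := exists r, memP (A2 r (TVar S s) (TVar S t)) psi.

Record Inv (A : {set option 'I_k}) (a rt : option 'I_k -> dom C) (dp : option 'I_k -> nat)
  (rho : dom C) : Prop := {
  inv0 : None \in A /\ a None = e;
  inv1 : forall s, s \in A -> leX (n - dp s) (a s) (Xv s);
  inv2 : forall s, s \in A -> near (dp s) (rt s) (a s);
  inv3 : forall s, s \in A -> dp s < #|A|;
  inv4 : forall s t, edge s t -> s \in A -> t \in A -> rt s = rt t;
  inv5a : forall s t, edge s t -> s \in A -> t \notin A -> rt s = rho;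
  inv5b : forall s t, edge s t -> t \in A -> s \notin A -> rt t = rho }.

Lemma cardA (A : {set option 'I_k}) : #|A| <= k.+1.
Proof. by have := max_card A; rewrite card_option card_ord. Qed.

Lemma extend A a rt dp rho x w r0 dp0 rho' :
  Inv A a rt dp rho -> x \notin A ->
  leX (n - dp0) w (Xv x) -> near dp0 r0 w -> dp0 < #|A|.+1 ->
  (forall t, t \in A -> edge x t \/ edge t x -> rt t = r0) ->
  (forall s t, edge s t -> s \in A -> t \notin A -> rt s = rho') ->
  (forall s t, edge s t -> t \in A -> s \notin A -> rt t = rho') ->
  r0 = rho' ->
  Inv (x |: A) (upd a x w) (upd rt x r0) (upd dp x dp0) rho'.
Proof.
move=> I Hx H1 H2 H3 Hd He1 He2 Hr.
have cardx : #|x |: A| = #|A|.+1 by rewrite cardsU1 Hx.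
have Hne : forall s, s \in A -> (s == x) = false.
  by move=> s Hs; apply/eqP => Esx; rewrite -Esx Hs in Hx.
rewrite /upd; split.
- have [H0 He] := inv0 I; split; first by rewrite in_setU1 H0 orbT.
  by rewrite Hne.
- move=> s; rewrite in_setU1 => /orP [/eqP ->|Hs]; first by rewrite eqxx.
  by rewrite Hne //; apply: (inv1 I).
- move=> s; rewrite in_setU1 => /orP [/eqP ->|Hs]; first by rewrite eqxx.
  by rewrite Hne //; apply: (inv2 I).
- rewrite cardx => s; rewrite in_setU1 => /orP [/eqP ->|Hs]; first by rewrite eqxx.
  by rewrite Hne //; apply: ltnW; rewrite ltnS; apply: (inv3 I).
- move=> s t Est; rewrite !in_setU1 => /orP [/eqP Es|Hs] /orP [/eqP Et|Ht].
  + by subst s t; rewrite eqxx.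
  + move: Est; rewrite Es => Est; rewrite eqxx Hne //; symmetry; apply: Hd => //; left; exact: Est.
  + move: Est; rewrite Et => Est; rewrite eqxx Hne //; apply: Hd => //; right; exact: Est.
  + by rewrite !Hne //; apply: (inv4 I) Est Hs Ht.
- move=> s t Est; rewrite !in_setU1 negb_or => /orP [/eqP Es|Hs] /andP [Htx Ht].
  + by subst s; rewrite eqxx.
  + by rewrite Hne //; apply: He1 Est Hs Ht.
- move=> s t Est; rewrite !in_setU1 negb_or => /orP [/eqP Et|Ht] /andP [Hsx Hs].
  + by subst t; rewrite eqxx.
  + by rewrite Hne //; apply: He2 Est Ht Hs.
Qed.

Lemma iterate j : forall A a rt dp rho, #|~: A| = j -> Inv A a rt dp rho ->
  exists a rt dp rho, Inv [set: option 'I_k] a rt dp rho.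
Proof.
elim: j => [|j IH] A a rt dp rho HA I.
  have EA : A = [set: option 'I_k].
    by apply/setP => x; rewrite inE; apply: NNPP => /negP Hx;
      move/eqP: HA; rewrite cards_eq0 => /eqP/setP/(_ x); rewrite !inE Hx.
  by rewrite EA in I; exists a, rt, dp, rho.
have [x Hx] : exists x, x \in ~: A.
  by apply/set0Pn; rewrite -card_gt0 HA.
have Hx' : x \notin A by rewrite inE in Hx.
have Hcard : #|~: (x |: A)| = j.
  by rewrite setCU setIC -setDE; move: HA; rewrite (cardsD1 x) Hx add1n => -[].
have Hdp : forall s, s \in A -> dp s <= k.
  by move=> s Hs; have := inv3 I Hs; have := cardA A; lia.
case: (EM (exists u y (dir : bool) r, u \in A /\ y \notin A /\
     memP (if dir then A2 r (TVar S u) (TVar S y) else A2 r (TVar S y) (TVar S u)) psi))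
  => [[u [y [dir [r [Hu [Hy Hm]]]]]]|Hno].
- have Hyc : #|~: (y |: A)| = j.
    have Hyc' : y \in ~: A by rewrite inE.
    by rewrite setCU setIC -setDE; move: HA; rewrite (cardsD1 y) Hyc' add1n => -[].
  have [du [dy [Hdu [Hdy HR]]]] : exists du dy, sval (Xv u) du /\ sval (Xv y) dy /\
      Rdir dir r du dy.
    have := Hsat Hm; case: dir {Hm} => /= [[d [d' [H1 [H2 H3]]]]|[d [d' [H1 [H2 H3]]]]].
      by exists d, d'; rewrite -!eval_Xv.
    by exists d', d; rewrite -!eval_Xv.
  have Hle : le (n - dp u) (a u) du := inv1 I Hu Hdu.
  have Hpu : n - dp u = (n - (dp u).+1).+1 by have := Hdp u Hu; lia.
  rewrite Hpu in Hle.
  have [w [Hw1 [Hw2 _]]] := step Hcol HL Hsep (p := n - (dp u).+1) (dir := dir) (r := r)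
    (b := a u) ltac:(have := Hdp u Hu; lia) Hle HR.
  have Hedge : edge u y \/ edge y u by move: Hm; case: (dir) => Hm; [left|right]; exists r.
  have Hru : rt u = rho.
    by case: Hedge => He; [apply: (inv5a I) He Hu Hy|apply: (inv5b I) He Hu Hy].
  apply: (IH (y |: A) _ _ _ rho Hyc).
  apply: (extend (w := w) (r0 := rho) (dp0 := (dp u).+1) I Hy) => //.
  + by apply: leX_of Hdy Hw2; lia.
  + rewrite -Hru; apply: near_E (inv2 I Hu) _.
    by rewrite /Rdir in Hw1; move: Hw1; case: (dir) => Hw1; exists r; [left|right].
  + by have := inv3 I Hu; lia.
  + move=> t Ht [He|He]; [apply: (inv5b I) He Ht Hy|apply: (inv5a I) He Ht Hy].
  + exact: (inv5a I).
  + exact: (inv5b I).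
- have Hnc : forall s t, edge s t -> (s \in A) = (t \in A).
    move=> s t [r Hm]; apply: NNPP => Hneq; apply: Hno.
    case Hs : (s \in A); rewrite Hs in Hneq.
      exists s, t, true, r; split => //; split => //.
      by move: Hneq; case: (t \in A) => // /(_ erefl).
    exists t, s, false, r; split; last by split; [rewrite Hs|].
    by move: Hneq; case: (t \in A) => // /(_ erefl).
  have [d0 Hd0] := class_nonempty (Xv x).
  apply: (IH (x |: A) _ _ _ d0 Hcard).
  apply: (extend (w := d0) (r0 := d0) (dp0 := 0) I Hx') => //.
  + by rewrite subn0; apply: leX_rep.
  + by move=> t Ht [He|He]; move: (Hnc _ _ He); rewrite Ht (negbTE Hx').
  + by move=> s t He Hs Ht; move: (Hnc _ _ He); rewrite Hs (negbTE Ht).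
  + by move=> s t He Ht Hs; move: (Hnc _ _ He); rewrite Ht (negbTE Hs).
Qed.

Lemma lift_sat : exists a' : 'I_k -> dom C,
  foldr (fun atm P => holds_atom a' e atm /\ P) True psi.
Proof.
have I0 : Inv [set None] (fun _ => e) (fun _ => e) (fun _ => 0) e.
  split => //.
  - by rewrite set11.
  - by move=> s; rewrite in_set1 => /eqP ->; rewrite subn0; apply: leX_qmap.
  - by move=> s _; rewrite cards1.
have [a [rt [dp [rho I]]]] := iterate erefl I0.
exists (fun i => a (Some i)).
have Ea : forall s, eval_term (fun i => a (Some i)) e (TVar S s) = a s.
  by case=> [i|] //=; rewrite (proj2 (inv0 I)).
have Hdp : forall s, dp s <= k.
  by move=> s; have := inv3 I (in_setT s); have := cardA [set: option 'I_k]; lia.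
apply: (proj2 (@fold_memP _ (holds_atom (fun i => a (Some i)) e) psi)) => atm Hm.
apply: atom_lift (Hsat Hm).
  case=> [s|c].
    rewrite Ea eval_Xv; apply: leX_mono (inv1 I (in_setT s)).
    by have := Hdp s; lia.
  have Hn2 : 2 <= n by lia.
  rewrite /=; apply: (leX_mono Hn2). exact: leX_qmap.
move=> r [s|c1] [t|c2] Heq; try by []. move=> _ _.
have Est : edge s t by exists r; rewrite -Heq.
rewrite !Ea.
have H1 := near_sym (inv2 I (in_setT s)).
have H2 := inv2 I (in_setT t).
rewrite (inv4 I Est (in_setT s) (in_setT t)) in H1.
apply: near_mono (near_trans H1 H2).
by have := Hdp s; have := Hdp t; lia.
Qed.

End Iter.

End Lift.

Theorem lemma19 (S : bsig) (C : structure S) :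
  bounded_degree C -> ptp_conservative C.
Proof.
move=> Hbd m.
have [K [col [Hcol Hsep]]] := coloring (2 * m).+2 Hbd.
exists m.+2, K, col; split => // e k psi; split.
- move=> [Hk [v Hv]]; split => //.
  exists (fun i => qmap (colored C col) m.+2 (v i)).
  have Hev : forall t, eval_term (A := reduct (quotient (colored C col) m.+2))
      (fun i => qmap (colored C col) m.+2 (v i)) (qmap (colored C col) m.+2 e) t =
      qmap (colored C col) m.+2 (eval_term v e t) by case=> [[i|]|c].
  have Hrefl : forall x, sval (qmap (colored C col) m.+2 x) x by move=> x j phi; split.
  apply: (proj2 (@fold_memP _ (holds_atom (A := reduct (quotient (colored C col) m.+2))
     (fun i => qmap (colored C col) m.+2 (v i)) (qmap (colored C col) m.+2 e)) psi)).
  move=> atm Hm.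
  have := proj1 (@fold_memP _ (holds_atom v e) psi) Hv atm Hm.
  case: atm {Hm} => [r|r t|r t1 t2|t c] /=; rewrite ?Hev.
  + by [].
  + by move=> H; exists (eval_term v e t).
  + by move=> H; exists (eval_term v e t1), (eval_term v e t2).
  + by move=> ->.
- move=> [Hk [v Hv]]; split => //.
  apply: (lift_sat Hcol (L := (2 * m).+2) isT Hsep (n := m.+2) isT) => //.
  + exact: (proj1 (@fold_memP _ _ psi) Hv).
  + lia.
Qed.
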